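(* Let $G$ be an irreducible triangulation of a surface with Euler genus $g\geq 1$, and let $S$ be a good independent set of $G$ such that $\phi(S)\succeq\phi(S')$ for every good independent set $S'$ of $G$. Let $i\in\{4,\dots,9\}$ and let $v$ be a vertex of $G-V(H_i)$ with $\deg_G(v)\leq i$. Then $v$ has at least three neighbours in some connected component of $H_i$.
   Context: Surfaces, triangulations and irreducibility: a triangulation of a surface $\Sigma$ is a 2-cell embedding of a simple finite graph in $\Sigma$ in which each face is bounded by three edges and each pair of faces share at most one edge; it is irreducible if no edge contraction (delete $vw$, identify $v,w$, remove parallel edges) yields another triangulation of $\Sigma$. Euler genus: $2h$ for the orientable surface with $h$ handles, $h$ for the non-orientable surface with $h$ crosscaps. (Such $G$ has minimum degree at least 4.) For a vertex $v$, $G_v$ is the subgraph of $G$ induced by $v$ and its neighbours. Two graphs are compatible if they share at most two vertices. For a rooted binary tree $T$ (each non-leaf node has exactly two children) with leaf set $L(T)$ and subtrees $T[x]$ rooted at nodes $x$, given subgraphs $G\langle u\rangle$ for leaves $u$, set $G\langle x\rangle:=\bigcup_{u\in L(T[x])}G\langle u\rangle$ for non-leaf $x$; this is a tree representation if $G\langle a\rangle,G\langle b\rangle$ are compatible whenever $a,b$ have a common parent. A tree representation respects a vertex set $S$ if $L(T)=S$ and $G\langle u\rangle=G_u$ for each $u\in S$. For an independent set $S$ of $G$ with $\deg_G(v)\leq 9$ for all $v\in S$, and $i\in\{4,\dots,9\}$, let $S_i:=\{v\in S:\deg_G(v)=i\}$, $\widehat{S_i}:=S_4\cup\dots\cup S_i$,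 and $H_i:=\bigcup_{v\in\widehat{S_i}}G_v$. Such $S$ is good if there is a tree representation $(T,\{G_u:u\in S\})$ respecting $S$ such that for every $i\in\{4,\dots,9\}$ and every component $X$ of $H_i$ there is a node $x$ of $T$ with $L(T[x])=\widehat{S_i}\cap V(X)$ and $X=G\langle x\rangle$. Let $\phi(S):=(|S_4|,|S_5|,\dots,|S_9|)$, and write $(a_4,\dots,a_9)\succ(b_4,\dots,b_9)$ if there is $j\in\{4,\dots,8\}$ with $a_i=b_i$ for all $i\in\{4,\dots,j\}$ and $a_{j+1}>b_{j+1}$ (so $\succeq$ is a linear order). *)

(* Defs.v *)
From mathcomp Require Import all_boot.
Set Implicit Arguments. Unset Strict Implicit. Unset Printing Implicit Defensive.

(* A triangulation G is given by a vertex set Vs of a finite type V, a     *)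
(* simple adjacency relation e, and the list Fs of its (triangular) faces, *)
(* each face being its 3-element vertex set.                              *)

Section Defs.
Variable V : finType.

Definition nbhd (e : rel V) (x : V) : {set V} := [set y | e x y].
Definition deg (e : rel V) (x : V) : nat := #|nbhd e x|.

Definition link (e : rel V) (Fs : seq {set V}) (v : V) : rel V :=
  fun a b => [&& e v a, e v b, a != b & [set v; a; b] \in Fs].

Definition is_triang (Vs : {set V}) (e : rel V) (Fs : seq {set V}) : Prop :=
  (forall x y, e x y = e y x) /\
  (forall x, ~~ e x x) /\
  (forall x y, e x y -> (x \in Vs) && (y \in Vs)) /\
  uniq Fs /\ Fs != [::] /\
  (forall f, f \in Fs ->
      #|f| = 3 /\ (forall x y, x \in f -> y \in f -> x != y -> e x y)) /\
  (forall x y, e x y -> count (fun f : {set V} => (x \in f) && (y \in f)) Fs = 2) /\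
  (* the link of every vertex is connected (hence a single cycle) *)
  (forall v, v \in Vs -> forall x y, e v x -> e v y -> connect (link e Fs v) x y) /\
  (forall x y, x \in Vs -> y \in Vs -> connect e x y).

Definition nedges (e : rel V) : nat := #|[set p : V * V | e p.1 p.2]| %/ 2.

(* Euler genus = 2 - chi, chi = |V| - |E| + |F| (chi <= 2 always) *)
Definition euler_genus (Vs : {set V}) (e : rel V) (Fs : seq {set V}) : nat :=
  (nedges e + 2) - (#|Vs| + size Fs).

(* contraction of the edge vw: w is identified with v *)
Definition contract_e (e : rel V) (v w : V) : rel V :=
  fun x y => [&& x != w, y != w, x != y &
                 [|| e x y, (x == v) && e w y | (y == v) && e w x]].
Definition mapw (v w : V) (f : {set V}) : {set V} :=
  if w \in f then v |: (f :\ w) else f.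
Definition contract_F (Fs : seq {set V}) (v w : V) : seq {set V} :=
  [seq mapw v w f | f : {set V} <- Fs & ~~ ((v \in f) && (w \in f))].

Definition irreducible (Vs : {set V}) (e : rel V) (Fs : seq {set V}) : Prop :=
  forall v w, e v w -> ~ is_triang (Vs :\ w) (contract_e e v w) (contract_F Fs v w).

Definition subgraph := ({set V} * {set V * V})%type.

Definition cnbhd (e : rel V) (v : V) : {set V} := v |: nbhd e v.
Definition Gv (e : rel V) (v : V) : subgraph :=
  (cnbhd e v, [set p | [&& p.1 \in cnbhd e v, p.2 \in cnbhd e v & e p.1 p.2]]).
Definition sgU (A B : subgraph) : subgraph := (A.1 :|: B.1, A.2 :|: B.2).
Definition compatible (A B : subgraph) : bool := #|A.1 :&: B.1| <= 2.

Inductive btree := Leaf of V | Node of btree & btree.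
Fixpoint leaves (t : btree) : seq V :=
  match t with Leaf u => [:: u] | Node l r => leaves l ++ leaves r end.
(* y is (the subtree rooted at) a node of t *)
Fixpoint is_subtree (y t : btree) : Prop :=
  y = t \/ match t with Leaf _ => False | Node l r => is_subtree y l \/ is_subtree y r end.
Fixpoint Gt (e : rel V) (t : btree) : subgraph :=
  match t with Leaf u => Gv e u | Node l r => sgU (Gt e l) (Gt e r) end.
Fixpoint tree_rep (e : rel V) (t : btree) : bool :=
  match t with
  | Leaf _ => true
  | Node l r => [&& compatible (Gt e l) (Gt e r), tree_rep e l & tree_rep e r]
  end.
Definition respects (e : rel V) (t : btree) (S : {set V}) : Prop :=
  tree_rep e t /\ uniq (leaves t) /\ [set x in leaves t] = S.

Definition Si (e : rel V) (S : {set V}) (i : nat) : {set V} :=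
  [set x in S | deg e x == i].
Definition hatS (e : rel V) (S : {set V}) (i : nat) : {set V} :=
  [set x in S | 4 <= deg e x <= i].
Definition Hsg (e : rel V) (S : {set V}) (i : nat) : subgraph :=
  (\bigcup_(x in hatS e S i) (Gv e x).1, \bigcup_(x in hatS e S i) (Gv e x).2).

Definition sgrel (X : subgraph) : rel V := fun x y => (x, y) \in X.2.
Definition sgcomp (X : subgraph) (x : V) : subgraph :=
  ([set y in X.1 | connect (sgrel X) x y],
   [set p in X.2 | connect (sgrel X) x p.1]).

Definition good (Vs : {set V}) (e : rel V) (S : {set V}) : Prop :=
  [/\ S \subset Vs,
      (forall x y, x \in S -> y \in S -> ~~ e x y),
      (forall x, x \in S -> deg e x <= 9)
    & exists t, respects e t S /\
        forall i, 4 <= i <= 9 -> forall x, x \in (Hsg e S i).1 ->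
          exists2 y, is_subtree y t &
            [set z in leaves y] = hatS e S i :&: (sgcomp (Hsg e S i) x).1 /\
            Gt e y = sgcomp (Hsg e S i) x].

Definition phi (e : rel V) (S : {set V}) (i : nat) : nat := #|Si e S i|.

Definition phi_gt (a b : nat -> nat) : Prop :=
  exists j, [/\ 4 <= j <= 9, (forall k, 4 <= k < j -> a k = b k) & b j < a j].
Definition phi_ge (a b : nat -> nat) : Prop :=
  (forall k, 4 <= k <= 9 -> a k = b k) \/ phi_gt a b.

End Defs.

(* Main.v *)
Require Import Defs.
From mathcomp Require Import all_boot zify.
Set Implicit Arguments. Unset Strict Implicit. Unset Printing Implicit Defensive.

Lemma subtree_refl (V : finType) (t : btree V) : is_subtree t t.
Proof. by case: t => [u|l r]; left. Qed.

Lemma subtree_trans (V : finType) (a b c : btree V) :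
  is_subtree a b -> is_subtree b c -> is_subtree a c.
Proof.
move=> hab; elim: c => [u|l IHl r IHr] /=.
- by move=> [E|[]]; subst b; exact: hab.
- case=> [E|[h|h]]; [by subst b; exact: hab | right; left; exact: IHl | right; right; exact: IHr].
Qed.

Lemma subtree_leaves (V : finType) (y t : btree V) :
  is_subtree y t -> {subset leaves y <= leaves t}.
Proof.
elim: t => [u|l IHl r IHr] /=.
- by case=> // ->.
- case=> [->//|[h|h]] x hx; rewrite mem_cat; [by rewrite IHl | by rewrite IHr ?orbT].
Qed.

Lemma subtree_uniq (V : finType) (y t : btree V) :
  is_subtree y t -> uniq (leaves t) -> uniq (leaves y).
Proof.
elim: t => [u|l IHl r IHr] /=.
- by case=> // ->.
- case=> [->//|[h|h]]; rewrite cat_uniq => /and3P[ul _ ur]; [exact: IHl | exact: IHr].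
Qed.

Lemma subtree_rep (V : finType) (e : rel V) (y t : btree V) :
  is_subtree y t -> tree_rep e t -> tree_rep e y.
Proof.
elim: t => [u|l IHl r IHr] /=.
- by case=> // ->.
- case=> [->//|[h|h]] /and3P[_ hl hr]; [exact: IHl | exact: IHr].
Qed.

Lemma leaves_gt0 (V : finType) (t : btree V) : 0 < size (leaves t).
Proof. by elim: t => [u|l IHl r IHr] //=; rewrite size_cat addn_gt0 IHl. Qed.

Lemma subtree_size (V : finType) (y t : btree V) :
  is_subtree y t -> y = t \/ size (leaves y) < size (leaves t).
Proof.
elim: t => [u|l IHl r IHr] /=.
- by case=> // ->; left.
- case=> [->|[h|h]]; first by left.
  + right; case: (IHl h) => [->|lt]; rewrite size_cat.
      by rewrite -[X in X < _]addn0 ltn_add2l leaves_gt0.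
    by apply: (leq_trans lt); rewrite leq_addr.
  + right; case: (IHr h) => [->|lt]; rewrite size_cat.
      by rewrite -[X in X < _]add0n ltn_add2r leaves_gt0.
    by apply: (leq_trans lt); rewrite leq_addl.
Qed.

Lemma subtree_nest (V : finType) (a b t : btree V) (u : V) :
  uniq (leaves t) -> is_subtree a t -> is_subtree b t ->
  u \in leaves a -> u \in leaves b -> is_subtree a b \/ is_subtree b a.
Proof.
elim: t => [w|l IHl r IHr] /=.
- by move=> _ [->|[]] [->|[]]; left; apply: subtree_refl.
- rewrite cat_uniq => /and3P[ul dis ur].
  case=> [->|[ha|ha]]; first by move=> hb _ _; right; case: hb => [->|]; [apply: subtree_refl| move=> h; right].
  + case=> [->|[hb|hb]] ua ub; first by left; right; left.
    * exact: IHl.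
    * exfalso; move/hasPn: dis => /(_ u); rewrite (subtree_leaves hb ub) (subtree_leaves ha ua).
      by move=> /(_ isT).
  + case=> [->|[hb|hb]] ua ub; first by left; right; right.
    * exfalso; move/hasPn: dis => /(_ u); rewrite (subtree_leaves hb ub) (subtree_leaves ha ua).
      by move=> /(_ isT).
    * exact: IHr.
Qed.

Lemma subtree_incl (V : finType) (a b t : btree V) :
  uniq (leaves t) -> is_subtree a t -> is_subtree b t ->
  {subset leaves a <= leaves b} -> is_subtree a b.
Proof.
move=> ut ha hb sub.
have := leaves_gt0 a; case E: (leaves a) => [//|u s] _.
have ua : u \in leaves a by rewrite E mem_head.
case: (subtree_nest ut ha hb ua (sub u ua)) => // hba.
case: (subtree_size hba) => [->|lt]; first exact: subtree_refl.
have := uniq_leq_size (subtree_uniq ha ut) sub.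
by rewrite leqNgt lt.
Qed.

Lemma Gt1E (V : finType) (e : rel V) (t : btree V) z :
  (z \in (Gt e t).1) = has (fun u => z \in cnbhd e u) (leaves t).
Proof. by elim: t => [u|l IHl r IHr] /=; [rewrite orbF | rewrite in_setU has_cat IHl IHr]. Qed.

Lemma Gt2E (V : finType) (e : rel V) (t : btree V) p :
  (p \in (Gt e t).2) = has (fun u => p \in (Gv e u).2) (leaves t).
Proof. by elim: t => [u|l IHl r IHr] /=; [rewrite orbF | rewrite in_setU has_cat IHl IHr]. Qed.

Lemma Gt1_sub (V : finType) (e : rel V) (a b : btree V) :
  {subset leaves a <= leaves b} -> (Gt e a).1 \subset (Gt e b).1.
Proof.
move=> sub; apply/subsetP => z; rewrite !Gt1E => /hasP[u /sub ub hu].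
by apply/hasP; exists u.
Qed.

Lemma leaf_in_Gt (V : finType) (e : rel V) (t : btree V) u :
  u \in leaves t -> u \in (Gt e t).1.
Proof. by move=> h; rewrite Gt1E; apply/hasP; exists u => //; rewrite /cnbhd setU11. Qed.

Fixpoint prune (V : finType) (k : pred V) (t : btree V) : option (btree V) :=
  match t with
  | Leaf u => if k u then Some (Leaf u) else None
  | Node l r => match prune k l, prune k r with
      | Some l', Some r' => Some (Node l' r')
      | Some l', None => Some l'
      | None, o => o end
  end.

Definition oleaves (V : finType) (o : option (btree V)) :=
  if o is Some t then leaves t else [::].

Lemma prune_leaves (V : finType) (k : pred V) t :
  oleaves (prune k t) = filter k (leaves t).
Proof.
elim: t => [u|l IHl r IHr] /=; first by case: (k u).
rewrite filter_cat -IHl -IHr.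
by case: (prune k l) => [l'|]; case: (prune k r) => [r'|] //=; rewrite cats0.
Qed.

Lemma prune_rep (V : finType) (e : rel V) (k : pred V) t t' :
  tree_rep e t -> prune k t = Some t' -> tree_rep e t'.
Proof.
elim: t t' => [u|l IHl r IHr] t' /=; first by case: (k u) => // _ [<-].
case/and3P=> c hl hr.
have Ll := prune_leaves k l; have Lr := prune_leaves k r.
case El: (prune k l) => [l'|]; case Er: (prune k r) => [r'|] // [<-] //=.
- apply/and3P; split; [|exact: IHl|exact: IHr].
  rewrite El Er /= in Ll Lr.
  rewrite /compatible in c *; apply: leq_trans c; apply: subset_leq_card; apply: setISS; apply: Gt1_sub.
    by move=> x; rewrite Ll mem_filter => /andP[].
  by move=> x; rewrite Lr mem_filter => /andP[].
- exact: IHl.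
- exact: IHr.
Qed.

Lemma prune_all (V : finType) (k : pred V) t :
  all k (leaves t) -> prune k t = Some t.
Proof.
elim: t => [u|l IHl r IHr] /=; first by rewrite andbT => ->.
by rewrite all_cat => /andP[/IHl -> /IHr ->].
Qed.

Lemma prune_subtree (V : finType) (k : pred V) y t :
  is_subtree y t -> all k (leaves y) ->
  exists2 t', prune k t = Some t' & is_subtree y t'.
Proof.
elim: t => [u|l IHl r IHr] /=.
- move=> [E|[]]; subst y => /= /andP[-> _]; exists (Leaf u) => //; by left.
- case=> [E|[h|h]] ha.
  + subst y; exists (Node l r); first by have := prune_all ha.
    exact: subtree_refl.
  + have [l' El sl] := IHl h ha; rewrite El.
    case: (prune k r) => [r'|]; last by exists l'.
    by exists (Node l' r') => //; right; left.
  + have [r' Er sr] := IHr h ha; rewrite Er.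
    case: (prune k l) => [l'|]; last by exists r'.
    by exists (Node l' r') => //; right; right.
Qed.

Lemma count2 (T : eqType) (P : pred T) (s : seq T) :
  uniq s -> count P s = 2 ->
  exists f1 f2, [/\ f1 \in s, f2 \in s, f1 != f2, P f1 & P f2] /\
    (forall f, f \in s -> P f -> f = f1 \/ f = f2).
Proof.
move=> us; rewrite -size_filter.
have uf : uniq (filter P s) by rewrite filter_uniq.
have mf : forall f, (f \in filter P s) = (f \in s) && P f by move=> f; rewrite mem_filter andbC.
case E: (filter P s) uf mf => [|f1 [|f2 [|f3 t]]] //= uf mf _.
exists f1, f2; split.
- have := mf f1; rewrite !inE eqxx /= => /esym/andP[h1 h2].
  have := mf f2; rewrite !inE eqxx orbT => /esym/andP[h3 h4].
  by move: uf; rewrite inE andbT => ->.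
- move=> f fs Pf; have := mf f; rewrite fs Pf !inE.
  by case/orP=> /eqP ->; [left|right].
Qed.

Lemma card3 (T : finType) (x y z : T) :
  x != y -> x != z -> y != z -> #|[set x; y; z]| = 3.
Proof.
move=> xy xz yz.
by rewrite -setUA !cardsU1 cards1 !inE (negbTE xy) (negbTE xz) (negbTE yz).
Qed.

Lemma face3 (T : finType) (f : {set T}) x :
  #|f| = 3 -> x \in f ->
  exists y z, [/\ y != z, y != x, z != x & f = [set x; y; z]].
Proof.
move=> c xf.
have c2 : #|f :\ x| = 2 by move: c; rewrite (cardsD1 x f) xf => -[].
move/eqP/cards2P: c2 => -[y [z [yz E]]].
have yf : y \in f :\ x by rewrite E !inE eqxx.
have zf : z \in f :\ x by rewrite E !inE eqxx orbT.
rewrite !inE in yf zf; case/andP: yf => yx _; case/andP: zf => zx _.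
exists y, z; split => //.
by rewrite -(setD1K xf) E setUA.
Qed.

Lemma face3b (T : finType) (f : {set T}) x y :
  #|f| = 3 -> x \in f -> y \in f -> x != y ->
  exists z, [/\ z != x, z != y & f = [set x; y; z]].
Proof.
move=> c xf yf xy.
have [y' [z' [yz yx zx E]]] := face3 c xf.
have yx' : (y == x) = false by rewrite eq_sym (negbTE xy).
move: yf; rewrite E !inE yx' /= => /orP[/eqP Ey|/eqP Ez].
- subst y; exists z'; split => //; by rewrite eq_sym.
- subst y; exists y'; split => //.
  by apply/setP => w; rewrite !inE orbAC.
Qed.

Lemma connect_closed_set (T : finType) (R : rel T) (K : pred T) x y :
  (forall p q, K p -> R p q -> K q) -> K x -> connect R x y -> K y.
Proof.
move=> cl Kx /connectP[p pth ->]; elim: p x Kx pth => [|z p IH] x Kx //=.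
by case/andP=> Rxz pth; apply: IH pth; apply: cl Rxz.
Qed.

Lemma connect_avoid (T : finType) (R R' : rel T) w x y :
  x != w -> y != w ->
  (forall p q, p != w -> q != w -> R p q -> connect R' p q) ->
  (forall p q, p != w -> q != w -> R p w -> R w q -> connect R' p q) ->
  connect R x y -> connect R' x y.
Proof.
move=> xw yw H1 H2 /connectP[p pth Ey].
suff: forall p z, path R z p -> (z != w -> connect R' x z) ->
   (z == w -> exists2 q, q != w & R q w /\ connect R' x q) ->
   last z p != w -> connect R' x (last z p).
  by move=> /(_ p x pth (fun _ => connect0 _ _)) H; rewrite Ey; apply: H; rewrite -?Ey // (negbTE xw).
clear pth Ey.
elim=> [|z' s IH] z /=; first by move=> _ h _ /h.
case/andP=> Rzz' pth hz hw hl; apply: IH pth _ _ hl.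
- move=> z'w; have [zw|zw] := eqVneq z w.
  + subst z; have [q qw [Rqw cq]] := hw (eqxx _).
    exact: connect_trans cq (H2 _ _ qw z'w Rqw Rzz').
  + exact: connect_trans (hz zw) (H1 _ _ zw z'w Rzz').
- move/eqP=> Ez'; subst z'; have [zw|zw] := eqVneq z w.
  + subst z; exact: hw (eqxx _).
  + by exists z => //; split => //; apply: hz.
Qed.

Lemma connect_restr (T : finType) (R R' : rel T) x z :
  (forall y q, connect R' x y -> R' y q -> R y q) -> connect R' x z -> connect R x z.
Proof.
move=> H /connectP[p pth ->].
elim/last_ind: p pth => [|p q IH] //=.
rewrite rcons_path last_rcons => /andP[pp st].
apply: connect_trans (IH pp) (connect1 _).
by apply: H st; apply/connectP; exists p.
Qed.

Lemma count_split (T : eqType) (p q : pred T) s :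
  count p s = count p (filter q s) + count p (filter (predC q) s).
Proof.
elim: s => //= x s ->; case: (q x) => /=; rewrite ?addnA //.
by rewrite [p x + _]addnC.
Qed.

Lemma count_sub (T : eqType) (P : pred T) (s1 s2 : seq T) :
  uniq s1 -> {subset s1 <= s2} -> count P s1 <= count P s2.
Proof.
move=> u1 sub; rewrite -!size_filter; apply: uniq_leq_size; first by rewrite filter_uniq.
by move=> x; rewrite !mem_filter => /andP[-> /sub].
Qed.

Lemma neqF (T : finType) (A B : {set T}) x : x \in A -> x \notin B -> A != B.
Proof. by move=> xA xB; apply/eqP => E; rewrite -E xA in xB. Qed.

Lemma arith_K4 m n : m <= 6 -> 4 <= n -> 0 < (m + 2) - (4 + n) -> False.
Proof. lia. Qed.

Lemma K4_contra (V : finType) (Vs : {set V}) (e : rel V) (Fs : seq {set V}) (v a b c : V) :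
  is_triang Vs e Fs -> 1 <= euler_genus Vs e Fs ->
  v \in Vs -> a != b -> a != c -> b != c ->
  nbhd e v = [set a; b; c] ->
  [set v; a; b] \in Fs -> [set v; a; c] \in Fs -> [set v; b; c] \in Fs ->
  [set a; b; c] \in Fs -> False.
Proof.
move=> Ht Hg vVs ab ac bc Nv F1F F2F F3F F4F.
case: Ht => [esym [eirr [eVs [uF [Fne [Fface [Fcnt [Flink Fconn]]]]]]]].
have inN : forall x, e v x = [|| x == a, x == b | x == c].
  by move=> x; transitivity (x \in nbhd e v); [rewrite inE | rewrite Nv !inE -orbA].
have eva : e v a by rewrite inN eqxx.
have evb : e v b by rewrite inN eqxx orbT.
have evc : e v c by rewrite inN eqxx !orbT.
have neq_e : forall x y, e x y -> x != y.
  by move=> x y exy; apply/eqP => E; rewrite E (negbTE (eirr y)) in exy.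
have va := neq_e _ _ eva; have vb := neq_e _ _ evb; have vc := neq_e _ _ evc.
have av : a != v by rewrite eq_sym. have bv : b != v by rewrite eq_sym.
have cv : c != v by rewrite eq_sym. have ba : b != a by rewrite eq_sym.
have ca : c != a by rewrite eq_sym. have cb : c != b by rewrite eq_sym.
have Dn := (negbTE va, negbTE vb, negbTE vc, negbTE av, negbTE bv, negbTE cv,
           negbTE ab, negbTE ac, negbTE bc, negbTE ba, negbTE ca, negbTE cb).
set K := [set v; a; b; c].
set L := [:: [set v; a; b]; [set v; a; c]; [set v; b; c]; [set a; b; c]].
have LF : {subset L <= Fs} by move=> f; rewrite /L !inE => /or4P[]/eqP->.
have uL : uniq L.
  rewrite /= !inE !negb_or !andbT.
  apply/and3P; split; [apply/and3P; split|apply/andP; split|];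
   [apply: (neqF (x := b))|apply: (neqF (x:=a))|apply: (neqF (x:=v))|apply: (neqF (x:=a))
   |apply: (neqF (x:=v))|apply: (neqF (x:=v))]; by rewrite !inE ?Dn ?eqxx.
have LK : forall f, f \in L -> f \subset K.
  by move=> f; rewrite /L !inE => /or4P[]/eqP->; apply/subsetP => z;
     rewrite !inE => /orP[/orP[]|]/eqP->; rewrite eqxx ?orbT.
have countL : forall x y, x \in K -> y \in K -> x != y ->
    2 <= count (fun f : {set V} => (x \in f) && (y \in f)) L.
  move=> x y; rewrite /K !inE => /orP[/orP[/orP[]|]|]/eqP-> /orP[/orP[/orP[]|]|]/eqP->;
  by rewrite ?eqxx //= !inE ?Dn ?eqxx.
have faceK : forall f x y, f \in Fs -> x \in K -> y \in K -> x != y ->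
    x \in f -> y \in f -> f \subset K.
  move=> f x y fF xK yK xy xf yf.
  case: (boolP (f \in L)) => fL; first exact: LK.
  pose P := fun f : {set V} => (x \in f) && (y \in f).
  have uf : uniq (f :: L) by rewrite cons_uniq fL uL.
  have sf : {subset f :: L <= Fs} by move=> g; rewrite inE => /orP[/eqP->//|/LF].
  have := count_sub P uf sf.
  have exy : e x y by have [_ ] := Fface f fF; apply.
  have -> : count P Fs = 2 by exact: (Fcnt x y exy).
  have -> : count P (f :: L) = P f + count P L by [].
  have -> : P f = true by rewrite /P xf yf.
  have := countL x y xK yK xy; rewrite -/P.
  by case: (count P L) => [|[|n]].
have KVs : K \subset Vs.
  apply/subsetP => z; rewrite !inE => /orP[/orP[/orP[]|]|]/eqP->//.
  - by have /andP[] := eVs _ _ eva.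
  - by have /andP[] := eVs _ _ evb.
  - by have /andP[] := eVs _ _ evc.
have nbK : forall x y, x \in K -> e x y -> y \in K.
  move=> x y xK exy.
  have xVs : x \in Vs by apply: (subsetP KVs).
  pose z := if x == v then a else v.
  have zK : z \in K by rewrite /z; case: eqP => _; rewrite !inE eqxx ?orbT.
  have exz : e x z.
    rewrite /z; case: eqP => [->//|/eqP xv].
    rewrite esym inN; move: xK; rewrite !inE (negbTE xv) /= -!orbA; done.
  have := Flink x xVs z y exz exy.
  apply: (@connect_closed_set _ _ (fun q => q \in K) z y) _ zK.
  move=> p q pK; rewrite /link => /and4P[exp exq pq fF].
  have xp := neq_e _ _ exp.
  have h1 : x \in [set x; p; q] by rewrite !inE eqxx.
  have h2 : p \in [set x; p; q] by rewrite !inE eqxx orbT.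
  have fK := faceK _ x p fF xK pK xp h1 h2.
  by apply: (subsetP fK); rewrite !inE eqxx orbT.
have VsK : Vs \subset K.
  apply/subsetP => x xVs.
  have vK : v \in K by rewrite !inE eqxx.
  exact: (@connect_closed_set _ e (fun q => q \in K) v x) (fun p q pK epq => nbK p q pK epq) vK (Fconn v x vVs xVs).
have cK : #|K| = 4.
  rewrite /K -!setUA !cardsU1 cards1 !inE ?Dn //.
have cVs : #|Vs| = 4.
  have EK : Vs = K by apply/eqP; rewrite eqEcard VsK (subset_leq_card KVs).
  by rewrite EK.
have sF : 4 <= size Fs by apply: (uniq_leq_size uL LF).
have cE : #|[set p : V * V | e p.1 p.2]| <= 12.
  pose Dg := [set (z, z) | z in K].
  have cD : #|Dg| = 4 by rewrite card_imset ?cK // => x y [].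
  have sub : [set p : V * V | e p.1 p.2] \subset setX K K :\: Dg.
    apply/subsetP => -[x y]; rewrite inE /= => exy.
    have xK : x \in K by apply: (subsetP VsK); have /andP[] := eVs _ _ exy.
    rewrite in_setD in_setX /= xK (nbK x y xK exy) andbT.
    rewrite andbT; apply/negP => /imsetP[z _ E]; case: E => E1 E2; subst x y; by rewrite (negbTE (eirr z)) in exy.
  apply: leq_trans (subset_leq_card sub) _.
  have sDg : Dg \subset setX K K.
    by apply/subsetP => p /imsetP[z zK ->]; rewrite in_setX zK.
  by rewrite cardsD (setIidPr sDg) cardsX cK cD.
have h6 : nedges e <= 6 by rewrite /nedges; apply: leq_trans (leq_div2r 2 cE) _.
move: Hg; rewrite /euler_genus cVs; apply: arith_K4 h6 sF.
Qed.

Lemma pair_abc (V : finType) (e : rel V) (a b c p q : V) :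
  (forall x y, e x y = e y x) -> e a b -> e a c -> e b c ->
  p \in [set a; b; c] -> q \in [set a; b; c] -> p != q -> e p q.
Proof.
move=> esym eab eac ebc; rewrite !inE => /orP[/orP[]|]/eqP-> /orP[/orP[]|]/eqP->;
rewrite ?eqxx // => _; by rewrite // esym.
Qed.

Lemma id3 (T:eqType) (a b c x y : T) : a != b -> a != c -> b != c -> x != y ->
 (((x==a)||(x==b)||(x==c)) && ((y==a)||(y==b)||(y==c)) : nat) =
 (((x==a)||(x==b)) && ((y==a)||(y==b))) + (((x==a)||(x==c)) && ((y==a)||(y==c))) + (((x==b)||(x==c))&&((y==b)||(y==c))).
Proof.
move=> ab ac bc xy.
have n2 : forall z p q : T, p != q -> ~~ ((z == p) && (z == q)).
  by move=> z p q pq; apply/negP => /andP[/eqP E1 /eqP E]; rewrite -E1 E eqxx in pq.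
have n3 : forall p : T, ~~ ((x == p) && (y == p)).
  by move=> p; apply/negP => /andP[/eqP E1 /eqP E]; rewrite E1 E eqxx in xy.
move: (n2 x _ _ ab) (n2 x _ _ ac) (n2 x _ _ bc) (n2 y _ _ ab) (n2 y _ _ ac) (n2 y _ _ bc) (n3 a) (n3 b) (n3 c).
by case: (x == a); case: (x == b); case: (x == c); case: (y == a); case: (y == b); case: (y == c).
Qed.

Lemma deg3_contra (V : finType) (Vs : {set V}) (e : rel V) (Fs : seq {set V}) (v a b c : V) :
  is_triang Vs e Fs -> irreducible Vs e Fs -> 1 <= euler_genus Vs e Fs ->
  v \in Vs -> a != b -> a != c -> b != c ->
  nbhd e v = [set a; b; c] ->
  [set v; a; b] \in Fs -> [set v; a; c] \in Fs -> [set v; b; c] \in Fs -> False.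
Proof.
move=> Ht Hirr Hg vVs ab ac bc Nv F1F F2F F3F.
case: (boolP ([set a; b; c] \in Fs)) => F4F.
  exact: (K4_contra Ht Hg vVs ab ac bc Nv F1F F2F F3F F4F).
have Ht' := Ht.
case: Ht' => [esym [eirr [eVs [uF [Fne [Fface [Fcnt [Flink Fconn]]]]]]]].
have inN : forall x, e v x = [|| x == a, x == b | x == c].
  by move=> x; transitivity (x \in nbhd e v); [rewrite inE | rewrite Nv !inE -orbA].
have eva : e v a by rewrite inN eqxx.
have evb : e v b by rewrite inN eqxx orbT.
have evc : e v c by rewrite inN eqxx !orbT.
have neq_e : forall x y, e x y -> x != y.
  by move=> x y exy; apply/eqP => E; rewrite E (negbTE (eirr y)) in exy.
have va := neq_e _ _ eva; have vb := neq_e _ _ evb; have vc := neq_e _ _ evc.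
have av : a != v by rewrite eq_sym. have bv : b != v by rewrite eq_sym.
have cv : c != v by rewrite eq_sym. have ba : b != a by rewrite eq_sym.
have ca : c != a by rewrite eq_sym. have cb : c != b by rewrite eq_sym.
have Dn := (negbTE va, negbTE vb, negbTE vc, negbTE av, negbTE bv, negbTE cv,
           negbTE ab, negbTE ac, negbTE bc, negbTE ba, negbTE ca, negbTE cb).
have ef : forall f x y, f \in Fs -> x \in f -> y \in f -> x != y -> e x y.
  by move=> f x y fF; have [_ ] := Fface f fF; apply.
have eab : e a b by apply: (ef _ a b F1F) => //; rewrite !inE eqxx ?orbT.
have eac : e a c by apply: (ef _ a c F2F) => //; rewrite !inE eqxx ?orbT.
have ebc : e b c by apply: (ef _ b c F3F) => //; rewrite !inE eqxx ?orbT.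
have eav : e a v by rewrite esym.
have abcN : forall x, (x \in [set a; b; c]) = e v x by move=> x; rewrite inN !inE -orbA.
have abcv : forall x, x \in [set a; b; c] -> x != v.
  by move=> x; rewrite abcN => /neq_e; rewrite eq_sym.
have cF1 : #|[set v; a; b]| = 3 := card3 va vb ab.
have cF2 : #|[set v; a; c]| = 3 := card3 va vc ac.
have cF3 : #|[set v; b; c]| = 3 := card3 vb vc bc.
have vfaces : forall f, f \in Fs -> v \in f ->
   [\/ f = [set v; a; b], f = [set v; a; c] | f = [set v; b; c]].
  move=> f fF vf.
  have [cf _] := Fface f fF.
  have sK : forall x, x \in f -> x != v -> [|| x == a, x == b | x == c].
    by move=> x xf xv; rewrite -inN; apply: ef fF vf xf _; rewrite eq_sym.
  case: (boolP (a \in f)) => af; first case: (boolP (b \in f)) => bf.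
  - apply: Or31; apply/eqP; rewrite eq_sym eqEcard cf cF1 leqnn andbT.
    by apply/subsetP => x; rewrite !inE => /orP[/orP[]|]/eqP->.
  - apply: Or32; apply/eqP; rewrite eqEcard cf cF2 leqnn andbT.
    apply/subsetP => x xf; rewrite !inE.
    have [->|xv] := eqVneq x v; first by [].
    move: (sK x xf xv) => /or3P[]/eqP E; subst x; rewrite ?eqxx ?orbT //.
    by rewrite xf in bf.
  - apply: Or33; apply/eqP; rewrite eqEcard cf cF3 leqnn andbT.
    apply/subsetP => x xf; rewrite !inE.
    have [->|xv] := eqVneq x v; first by [].
    move: (sK x xf xv) => /or3P[]/eqP E; subst x; rewrite ?eqxx ?orbT //.
    by rewrite xf in af.
have vF3 : v \in [set v; b; c] by rewrite !inE eqxx.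
have mapF3 : mapw a v [set v; b; c] = [set a; b; c].
  rewrite /mapw vF3; apply/setP => x; rewrite !inE.
  have [->|xv] := eqVneq x v; first by rewrite ?Dn.
  by rewrite /= orbA.
have clas : forall f, f \in Fs -> ~~ ((a \in f) && (v \in f)) ->
    (v \in f /\ f = [set v; b; c]) \/ (v \notin f).
  move=> f fF; case: (boolP (v \in f)) => vf; last by right.
  rewrite andbT => naf; left; split => //.
  by case: (vfaces f fF vf) => E //; rewrite E !inE eqxx ?orbT in naf.
have mF : forall f, (f \in contract_F Fs a v) =
    ((f \in Fs) && (v \notin f)) || (f == [set a; b; c]).
  move=> f; apply/mapP/idP.
  - case=> g; rewrite mem_filter => /andP[nq gF] ->.
    case: (clas g gF nq) => [[_ ->]|vg]; first by rewrite mapF3 eqxx orbT.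
    by rewrite /mapw (negbTE vg) gF vg.
  - case/orP => [/andP[fF vf]|/eqP->].
    + exists f; last by rewrite /mapw (negbTE vf).
      by rewrite mem_filter fF (negbTE vf) andbF.
    + exists [set v; b; c]; last by rewrite mapF3.
      by rewrite mem_filter F3F !inE ?Dn.
have ceE : forall x y, contract_e e a v x y = [&& x != v, y != v & e x y].
  move=> x y; rewrite /contract_e.
  case: (boolP (x != v)) => xv //=; case: (boolP (y != v)) => yv //=.
  apply/idP/idP.
  - case/andP => xy /or3P[//| /andP[/eqP Ex vy] | /andP[/eqP Ey vx]].
    + subst x; rewrite -abcN in vy.
      by apply: (pair_abc esym eab eac ebc) => //; rewrite !inE eqxx.
    + subst y; rewrite -abcN in vx; rewrite esym.
      apply: (pair_abc esym eab eac ebc) => //; first by rewrite !inE eqxx.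
      by rewrite eq_sym.
  - move=> exy; rewrite exy orTb andbT; exact: neq_e.
have uF' : uniq (contract_F Fs a v).
  rewrite /contract_F map_inj_in_uniq ?filter_uniq //.
  move=> f g; rewrite !mem_filter => /andP[nf fF] /andP[ng gF].
  case: (clas f fF nf) => [[_ Ef]|vf]; case: (clas g gF ng) => [[_ Eg]|vg].
  - by rewrite Ef Eg.
  - rewrite Ef mapF3 /mapw (negbTE vg) => E; by rewrite E gF in F4F.
  - rewrite Eg mapF3 /mapw (negbTE vf) => E; by rewrite -E fF in F4F.
  - by rewrite /mapw (negbTE vf) (negbTE vg).
have pF : perm_eq (filter (fun f : {set V} => v \in f) Fs)
    [:: [set v; a; b]; [set v; a; c]; [set v; b; c]].
  apply: uniq_perm; first by rewrite filter_uniq.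
  - rewrite /= !inE !andbT negb_or.
    rewrite (neqF (x := b)) ?(neqF (x := a)) ?(neqF (x := a)) //; by rewrite !inE ?Dn ?eqxx.
  - move=> f; rewrite mem_filter; apply/andP/idP => [[vf fF]|].
      by rewrite !inE; case: (vfaces f fF vf) => ->; rewrite eqxx ?orbT.
    by rewrite !inE => /or3P[]/eqP->; rewrite !inE eqxx.
have cnt : forall x y, contract_e e a v x y ->
   count (fun f : {set V} => (x \in f) && (y \in f)) (contract_F Fs a v) = 2.
  move=> x y; rewrite ceE => /and3P[xv yv exy].
  have xy := neq_e _ _ exy.
  rewrite -(Fcnt x y exy) /contract_F count_map count_filter.
  rewrite (count_split _ (fun f : {set V} => v \in f) Fs) [in RHS](count_split _ (fun f : {set V} => v \in f) Fs).
  congr (_ + _).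
  - have /permP pc := pF; rewrite !pc /= mapF3.
    have t1 : (a \in [set v; a; b]) && (v \in [set v; a; b]) by rewrite !inE !eqxx !orbT.
    have t2 : (a \in [set v; a; c]) && (v \in [set v; a; c]) by rewrite !inE !eqxx !orbT.
    have t3 : (a \in [set v; b; c]) && (v \in [set v; b; c]) = false by rewrite !inE ?Dn.
    rewrite t1 t2 t3 !andbF andbT /= !addn0 !inE (negbTE xv) (negbTE yv) /= addnA.
    rewrite !add0n addnA; exact: id3.
  - apply: eq_in_count => f; rewrite mem_filter /= => /andP[nvf fF].
    by rewrite /mapw (negbTE nvf) andbF andbT.
apply: (Hirr a v eav).
split; [|split; [|split; [|split; [|split; [|split; [|split; [|split]]]]]]].
- by move=> x y; rewrite !ceE esym andbCA.
- by move=> x; rewrite ceE (negbTE (eirr x)) !andbF.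
- move=> x y; rewrite ceE !in_setD1 => /and3P[xv yv /eVs/andP[-> ->]]; by rewrite xv yv.
- exact: uF'.
- apply/eqP => E; have := mF [set a; b; c]; rewrite E eqxx orbT in_nil; done.
- move=> f; rewrite mF => /orP[/andP[fF vf]|/eqP->].
  + have [cf ef'] := Fface f fF; split => // x y xf yf xy.
    rewrite ceE (ef' x y xf yf xy) andbT.
    apply/andP; split; apply/eqP => E; subst; [by rewrite xf in vf| by rewrite yf in vf].
  + split; first exact: card3 ab ac bc.
    move=> x y xa ya xy; rewrite ceE (pair_abc esym eab eac ebc xa ya xy) andbT.
    by rewrite (abcv _ xa) (abcv _ ya).
- exact: cnt.
- move=> u; rewrite in_setD1 => /andP[uv uVs] p q.
  rewrite !ceE => /and3P[_ pv eup] /and3P[_ qv euq].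
  apply: (connect_avoid (w := v) (R := link e Fs u)) pv qv _ _ (Flink u uVs p q eup euq).
  + move=> p' q' p'v q'v /and4P[eup' euq' pq' fF]; apply: connect1.
    rewrite /link !ceE uv p'v q'v eup' euq' pq' /= mF fF /=.
    by apply/orP; left; rewrite !inE (eq_sym v u) (eq_sym v p') (eq_sym v q') (negbTE uv) (negbTE p'v) (negbTE q'v).
  + move=> p' q' p'v q'v /and4P[eup' euv _ fF1] /and4P[_ euq' _ fF2].
    have [->|pq] := eqVneq p' q'; first exact: connect0.
    apply: connect1; rewrite /link !ceE uv p'v q'v eup' euq' pq /= mF.
    apply/orP; right.
    have up : u \in [set a; b; c] by rewrite abcN esym.
    have pp : p' \in [set a; b; c].
      rewrite abcN esym; apply: (ef _ p' v fF1) => //; rewrite !inE eqxx ?orbT //.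
    have qq : q' \in [set a; b; c].
      rewrite abcN esym; apply: (ef _ q' v fF2) => //; rewrite !inE eqxx ?orbT //.
    rewrite eqEcard (card3 (neq_e _ _ eup') (neq_e _ _ euq') pq) card3 // leqnn andbT.
    rewrite !inE in up pp qq.
    by apply/subsetP => z; rewrite !inE => /orP[/orP[]|]/eqP->.
- move=> x y; rewrite !in_setD1 => /andP[xv xVs] /andP[yv yVs].
  apply: (connect_avoid (w := v) (R := e)) xv yv _ _ (Fconn x y xVs yVs).
  + by move=> p q pv qv epq; apply: connect1; rewrite ceE pv qv.
  + move=> p q pv qv epv evq; have [->|pq] := eqVneq p q; first exact: connect0.
    apply: connect1; rewrite ceE pv qv /=.
    by apply: (pair_abc esym eab eac ebc) => //; rewrite abcN // esym.
Qed.

Lemma first_step (T : finType) (R : rel T) x y : connect R x y -> x != y -> exists z, R x z.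
Proof.
move=> /connectP[[|z p] /= pth ->]; first by rewrite eqxx.
by case/andP: pth => h _; exists z.
Qed.

Lemma deg_ge4 (V : finType) (Vs : {set V}) (e : rel V) (Fs : seq {set V}) (v : V) :
  is_triang Vs e Fs -> irreducible Vs e Fs -> 1 <= euler_genus Vs e Fs ->
  v \in Vs -> 4 <= deg e v.
Proof.
move=> Ht Hirr Hg vVs.
have Ht' := Ht.
case: Ht' => [esym [eirr [eVs [uF [Fne [Fface [Fcnt [Flink Fconn]]]]]]]].
have ef : forall f x y, f \in Fs -> x \in f -> y \in f -> x != y -> e x y.
  by move=> f x y fF; have [_ ] := Fface f fF; apply.
have neq_e : forall x y, e x y -> x != y.
  by move=> x y exy; apply/eqP => E; rewrite E (negbTE (eirr y)) in exy.
have faceVs : forall f x, f \in Fs -> x \in f -> x \in Vs.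
  move=> f x fF xf; have [cf _] := Fface f fF.
  have [y [z [yz yx zx Ef]]] := face3 cf xf.
  have yf : y \in f by rewrite Ef !inE eqxx orbT.
  have xy : x != y by rewrite eq_sym.
  by have /andP[] := eVs _ _ (ef f x y fF xf yf xy).
have [a eva] : exists a, e v a.
  case E: Fs Fne => [//|f0 s] _.
  have f0F : f0 \in Fs by rewrite E mem_head.
  have [cf _] := Fface f0 f0F.
  have [x0 x0f] : exists x, x \in f0 by apply/card_gt0P; rewrite cf.
  have [y [z [yz yx zx Ef]]] := face3 cf x0f.
  have [u [uf uv]] : exists u, u \in f0 /\ u != v.
    case: (eqVneq y v) => [Eyv|yv].
    - exists z; split; first by rewrite Ef !inE eqxx !orbT.
      by rewrite -Eyv eq_sym.
    - by exists y; split => //; rewrite Ef !inE eqxx orbT.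
  have uVs := faceVs _ _ f0F uf.
  have vu : v != u by rewrite eq_sym.
  exact: first_step (Fconn v u vVs uVs) vu.
have va := neq_e _ _ eva.
have [f1 [f2 [[f1F f2F f12 P1 P2] _]]] := count2 uF (Fcnt v a eva).
case/andP: P1 => vf1 af1; case/andP: P2 => vf2 af2.
have [c1 _] := Fface f1 f1F; have [c2 _] := Fface f2 f2F.
have [b [bv ba E1]] := face3b c1 vf1 af1 va.
have [c [cv ca E2]] := face3b c2 vf2 af2 va.
have bc : b != c by apply/eqP => Ebc; move/eqP: f12; apply; rewrite E1 E2 Ebc.
have ab : a != b by rewrite eq_sym. have ac : a != c by rewrite eq_sym.
have bf1 : b \in f1 by rewrite E1 !inE eqxx !orbT.
have cf2 : c \in f2 by rewrite E2 !inE eqxx !orbT.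
have evb : e v b by apply: (ef f1 v b f1F vf1 bf1); rewrite eq_sym.
have evc : e v c by apply: (ef f2 v c f2F vf2 cf2); rewrite eq_sym.
have sub : [set a; b; c] \subset nbhd e v.
  by apply/subsetP => x; rewrite !inE => /orP[/orP[]|]/eqP->.
have c3 := card3 ab ac bc.
rewrite leqNgt; apply/negP => d3.
have Nv : nbhd e v = [set a; b; c].
  apply/eqP; rewrite eq_sym eqEcard sub c3.
  by move: d3; rewrite /deg ltnS.
have [g1 [g2 [[g1F g2F g12 Q1 Q2] Qu]]] := count2 uF (Fcnt v b evb).
have [g [gF gf1 vg bg]] : exists g, [/\ g \in Fs, g != f1, v \in g & b \in g].
  case: (eqVneq g1 f1) => [Eg|ne].
  - case/andP: Q2 => h1 h2; exists g2; split => //; by rewrite -Eg eq_sym.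
  - by case/andP: Q1 => h1 h2; exists g1; split.
have [cg _] := Fface g gF.
have vb : v != b by rewrite eq_sym.
have [z [zv zb Eg]] := face3b cg vg bg vb.
have zg : z \in g by rewrite Eg !inE eqxx !orbT.
have evz : e v z by apply: (ef g v z gF vg zg); rewrite eq_sym.
have : z \in nbhd e v by rewrite inE.
rewrite Nv !inE => /orP[/orP[]|]/eqP Ez.
- subst z; move/eqP: gf1; apply; rewrite Eg E1.
  by apply/setP => x; rewrite !inE orbAC.
- by subst z; rewrite eqxx in zb.
- subst z.
  apply: (deg3_contra Ht Hirr Hg vVs ab ac bc Nv).
  + by rewrite -E1.
  + by rewrite -E2.
  + by rewrite -Eg.
Qed.

Lemma Hsg1P (V : finType) (e : rel V) S i z :
  reflect (exists2 w, w \in hatS e S i & z \in cnbhd e w) (z \in (Hsg e S i).1).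
Proof. exact: bigcupP. Qed.

Lemma Hsg2P (V : finType) (e : rel V) S i p :
  reflect (exists2 w, w \in hatS e S i & p \in (Gv e w).2) (p \in (Hsg e S i).2).
Proof. exact: bigcupP. Qed.

Lemma Gv2E (V : finType) (e : rel V) u (p : V * V) :
  (p \in (Gv e u).2) = [&& p.1 \in cnbhd e u, p.2 \in cnbhd e u & e p.1 p.2].
Proof. by rewrite inE. Qed.

Lemma Hsg_sym (V : finType) (e : rel V) S i :
  (forall x y, e x y = e y x) -> symmetric (sgrel (Hsg e S i)).
Proof.
move=> esym x y; rewrite /sgrel.
by apply/idP/idP => /Hsg2P[w wS h]; apply/Hsg2P; exists w => //; move: h;
  rewrite !Gv2E /= esym => /and3P[-> -> ->].
Qed.

Lemma Hsg_edge (V : finType) (e : rel V) S i (p : V * V) :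
  p \in (Hsg e S i).2 -> (p.1 \in (Hsg e S i).1) /\ (p.2 \in (Hsg e S i).1).
Proof.
case/Hsg2P => w wS; rewrite Gv2E => /and3P[h1 h2 _].
by split; apply/Hsg1P; exists w.
Qed.

Lemma Hsg_sub1 (V : finType) (e : rel V) S i j z :
  {subset hatS e S i <= hatS e S j} -> z \in (Hsg e S i).1 -> z \in (Hsg e S j).1.
Proof. by move=> sub /Hsg1P[w /sub wS h]; apply/Hsg1P; exists w. Qed.

Lemma Hsg_sub2 (V : finType) (e : rel V) S i j p :
  {subset hatS e S i <= hatS e S j} -> p \in (Hsg e S i).2 -> p \in (Hsg e S j).2.
Proof. by move=> sub /Hsg2P[w /sub wS h]; apply/Hsg2P; exists w. Qed.

Lemma connect_mono (T : finType) (R R' : rel T) x y :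
  (forall p q, R p q -> R' p q) -> connect R x y -> connect R' x y.
Proof.
move=> h /connectP[p pth ->]; apply/connectP; exists p => //.
exact: sub_path pth.
Qed.

Lemma comp_same (V : finType) (X : subgraph V) x y :
  symmetric (sgrel X) -> connect (sgrel X) x y -> sgcomp X x = sgcomp X y.
Proof.
move=> sy cxy; have csym := sym_connect_sym sy.
have E : forall z, connect (sgrel X) x z = connect (sgrel X) y z.
  move=> z; apply/idP/idP => h; last exact: connect_trans cxy h.
  by apply: connect_trans h; rewrite csym.
by rewrite /sgcomp; congr pair; apply/setP => z; rewrite !inE E.
Qed.

Lemma ex_set0 (T : finType) (P : pred T) : [exists x in (set0 : {set T}), P x] = false.
Proof. by apply/negbTE/existsPn => x; rewrite inE. Qed.

Lemma existsU1 (T : finType) (P : pred T) y (Y : {set T}) :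
  [exists x in y |: Y, P x] = P y || [exists x in Y, P x].
Proof.
apply/idP/idP.
- case/exists_inP => x; rewrite !inE => /orP[/eqP->|xY] Px; first by rewrite Px.
  by apply/orP; right; apply/exists_inP; exists x.
- case/orP => [Py|/exists_inP[x xY Px]]; apply/exists_inP.
  + by exists y; rewrite ?inE ?eqxx.
  + by exists x; rewrite ?inE ?xY ?orbT.
Qed.

Lemma good_ext (V : finType) (Vs : {set V}) (e : rel V) (S : {set V}) (i : nat) (v : V) :
  (forall x y, e x y = e y x) -> (forall x, ~~ e x x) -> good Vs e S -> 4 <= i <= 9 -> v \in Vs ->
  v \notin (Hsg e S i).1 -> 4 <= deg e v <= i ->
  (forall x, x \in (Hsg e S i).1 -> #|nbhd e v :&: (sgcomp (Hsg e S i) x).1| <= 2) ->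
  good Vs e (v |: hatS e S (deg e v)).
Proof.
move=> esym eirr [SVs Sind Sdeg [T [[Trep [Tuniq Tleaves]] Tnodes]]] /andP[i4 i9] vVs vHi
  /andP[d4 di] Hcap.
set d := deg e v.
set H := Hsg e S d.
set Hi := Hsg e S i.
have hatSdi : {subset hatS e S d <= hatS e S i}.
  move=> w; rewrite !inE => /andP[-> /andP[-> wd]] /=; exact: leq_trans wd di.
have HHi1 : forall z, z \in H.1 -> z \in Hi.1 by move=> z; apply: Hsg_sub1.
have HHi2 : forall p, p \in H.2 -> p \in Hi.2 by move=> p; apply: Hsg_sub2.
have vH : v \notin H.1 by apply: contra vHi; apply: HHi1.
have wv : forall w, w \in hatS e S i -> (w != v) /\ ~~ e v w.
  move=> w wS; have : v \notin cnbhd e w.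
    by apply: contra vHi => h; apply/Hsg1P; exists w.
  rewrite !inE negb_or esym => /andP[h1 h2]; split => //; by rewrite eq_sym.
have symH : symmetric (sgrel H) := Hsg_sym S d esym.
have csym := sym_connect_sym symH.
have edgeH : forall p, p \in H.2 -> (p.1 \in H.1) /\ (p.2 \in H.1) by move=> p; apply: Hsg_edge.
have Hnode : forall x, x \in H.1 -> exists2 n, is_subtree n T &
    [set z in leaves n] = hatS e S d :&: (sgcomp H x).1 /\ Gt e n = sgcomp H x.
  by apply: Tnodes; rewrite d4 (leq_trans di i9).
set cH := sgcomp H.
have cH1 : forall y z, (z \in (cH y).1) = (z \in H.1) && connect (sgrel H) y z.
  by move=> y z; rewrite inE.
have cH2 : forall y p, (p \in (cH y).2) = (p \in H.2) && connect (sgrel H) y p.1.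
  by move=> y p; rewrite inE.
have cHsub : forall y z, z \in (cH y).1 -> z \in H.1.
  by move=> y z; rewrite cH1 => /andP[].
have cover : forall y0 y z, y \in H.1 -> z \in (cH y0).1 -> z \in (cH y).1 -> y \in (cH y0).1.
  move=> y0 y z yH; rewrite !cH1 => /andP[_ c1] /andP[_ c2].
  by rewrite yH; apply: connect_trans c1 _; rewrite csym.
pose Inv := fun (M : btree V) (Y : {set V}) (ns : seq V) =>
 [/\ tree_rep e M, uniq (leaves M), Y \subset nbhd e v :&: H.1,
     (forall z, (z \in (Gt e M).1) = (z \in cnbhd e v) || [exists y0 in Y, z \in (cH y0).1]) &
     [/\ (forall p, (p \in (Gt e M).2) = (p \in (Gv e v).2) || [exists y0 in Y, p \in (cH y0).2]),
     (forall u, (u \in leaves M) = (u == v) || (u \in hatS e S d) && [exists y0 in Y, u \in (cH y0).1]),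
     (forall y, y \in ns -> y \in H.1 -> [exists y0 in Y, y \in (cH y0).1]) &
     (forall y0, y0 \in Y -> exists n0, [/\ is_subtree n0 T, is_subtree n0 M &
         [set z in leaves n0] = hatS e S d :&: (cH y0).1])]].
have build : forall ns : seq V, {subset ns <= nbhd e v} -> exists M, exists Y, Inv M Y ns.
  elim => [|y ns IH] hns.
  - exists (Leaf v), set0; split => //.
    + by rewrite sub0set.
    + by move=> z; rewrite ex_set0 orbF.
    + split => //.
      * by move=> p; rewrite ex_set0 orbF.
      * by move=> u; rewrite ex_set0 andbF orbF inE.
      * by move=> y0; rewrite inE.
  - have [M [Y [Mrep Mu YN MG1 [MG2 Ml Mcov Mn]]]] : exists M Y, Inv M Y ns.
      by apply: IH => z zn; apply: hns; rewrite inE zn orbT.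
    have yN : y \in nbhd e v by apply: hns; rewrite mem_head.
    case: (boolP ((y \in H.1) && ~~ [exists y0 in Y, y \in (cH y0).1])) => [/andP[yH ncov]|hc].
    + have [n nT [nl nG]] := Hnode y yH.
      have disj : forall z, z \in (cH y).1 -> z \in (Gt e M).1 -> z \in nbhd e v.
        move=> z zc; rewrite MG1 => /orP[|/exists_inP[y0 y0Y zc0]].
        * rewrite !inE => /orP[/eqP Ezv|//]; subst z.
          by rewrite (cHsub _ _ zc) in vH.
        * by move: ncov; have := cover _ _ _ yH zc0 zc => h; rewrite (introT exists_inP) //; exists y0.
      have nlE : forall u, (u \in leaves n) = (u \in hatS e S d) && (u \in (cH y).1).
        by move=> u; rewrite -in_setI -nl inE.
      exists (Node M n), (y |: Y); split.
      * rewrite /= Mrep (subtree_rep nT Trep) !andbT /compatible nG.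
        apply: leq_trans (Hcap y (HHi1 y yH)); apply: subset_leq_card.
        apply/subsetP => z; rewrite in_setI => /andP[zM zc].
        rewrite in_setI (disj z zc zM) /= inE.
        move: zc; rewrite cH1 => /andP[zH c]; rewrite (HHi1 _ zH) /=.
        by apply: connect_mono c => p q; apply: HHi2.
      * rewrite /= cat_uniq Mu (subtree_uniq nT Tuniq) andbT /=.
        apply/hasPn => u; rewrite nlE => /andP[uS uc]; apply/negP; rewrite Ml.
        case/orP => [/eqP Euv|/andP[_ /exists_inP[y0 y0Y uc0]]].
          by subst u; rewrite (cHsub _ _ uc) in vH.
        by move: ncov; rewrite (introT exists_inP) //; exists y0 => //; apply: cover _ _ _ yH uc0 uc.
      * by rewrite subUset sub1set inE yN yH YN.
      * by move=> z; rewrite /= in_setU MG1 nG existsU1 -orbA [X in _ || X]orbC.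
      split.
      * by move=> p; rewrite /= in_setU MG2 nG existsU1 -orbA [X in _ || X]orbC.
      * move=> u; rewrite /= mem_cat Ml nlE (existsU1 (fun y0 => u \in (cH y0).1)).
        by case: (u == v); case: (u \in hatS e S d); case: (u \in (cH y).1); case: [exists y0 in Y, u \in (cH y0).1].
      * move=> z; rewrite inE => /orP[/eqP->|zn] zH; rewrite existsU1.
          by rewrite cH1 yH connect0.
        by rewrite Mcov ?orbT.
      * move=> y0; rewrite in_setU1 => /orP[/eqP->|y0Y].
          by exists n; split => //; [right; right; apply: subtree_refl].
        have [n0 [n0T n0M n0l]] := Mn y0 y0Y.
        by exists n0; split => //; right; left.
    + exists M, Y; split => //; split => //.
      move=> z; rewrite inE => /orP[/eqP->|zn] zH; last exact: Mcov.
      by move: hc; rewrite zH /= negbK.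
have [M [Y [Mrep Mu YN MG1 [MG2 Ml Mcov Mn]]]] : exists M Y, Inv M Y (enum (nbhd e v)).
  by apply: build => z; rewrite mem_enum.
have cov : forall y, y \in nbhd e v -> y \in H.1 -> [exists y0 in Y, y \in (cH y0).1].
  by move=> y yN; apply: Mcov; rewrite mem_enum.
have cnbhdE : forall u z, (z \in cnbhd e u) = (z == u) || e u z.
  by move=> u z; rewrite !inE.
have MvH : forall z, z \in (Gt e M).1 -> z \in H.1 -> exists2 y0, y0 \in Y & z \in (cH y0).1.
  move=> z zM zH; move: zM; rewrite MG1 => /orP[|/exists_inP[y0 y0Y h]]; last by exists y0.
  rewrite cnbhdE => /orP[/eqP Ezv|evz]; first by subst z; rewrite zH in vH.
  have zN : z \in nbhd e v by rewrite inE.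
  by have /exists_inP[y0 ? ?] := cov z zN zH; exists y0.
have SdH : forall u, u \in hatS e S d -> u \in H.1.
  by move=> u uS; apply/Hsg1P; exists u => //; rewrite cnbhdE eqxx.
have Sd_notM : forall u, u \in hatS e S d -> u \in (Gt e M).1 -> exists2 y0, y0 \in Y & u \in (cH y0).1.
  by move=> u uS uM; apply: MvH uM (SdH u uS).
have connH_nb : forall u z, u \in hatS e S d -> z \in cnbhd e u -> connect (sgrel H) u z.
  move=> u z uS; rewrite cnbhdE => /orP[/eqP->|euz]; first exact: connect0.
  apply: connect1; rewrite /sgrel; apply/Hsg2P; exists u => //.
  by rewrite Gv2E /= !cnbhdE eqxx euz orbT.
have Mcomp : forall y0 z, y0 \in Y -> z \in (cH y0).1 -> z \in (Gt e M).1.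
  by move=> y0 z y0Y h; rewrite MG1; apply/orP; right; apply/exists_inP; exists y0.
pose keep := fun u => (u \in hatS e S d) && (u \notin (Gt e M).1).
have keptfar : forall u z, keep u -> z \in cnbhd e u -> z \notin (Gt e M).1.
  move=> u z /andP[uS uM] zu; apply/negP => zM.
  have zH : z \in H.1 by apply/Hsg1P; exists u.
  have [y0 y0Y zc] := MvH z zM zH.
  move/negP: uM; apply; apply: (Mcomp y0) => //.
  move: zc; rewrite !cH1 (SdH u uS) => /andP[_ c]; apply: connect_trans c _.
  by rewrite csym; apply: connH_nb.
pose T' := if prune keep T is Some r then Node r M else M.
have T'M : is_subtree M T'.
  rewrite /T'; case: (prune keep T) => [r|]; last exact: subtree_refl.
  by right; right; apply: subtree_refl.
have T'r : forall y r, prune keep T = Some r -> is_subtree y r -> is_subtree y T'.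
  by move=> y r E h; rewrite /T' E; right; left.
have T'leaves : leaves T' = oleaves (prune keep T) ++ leaves M.
  by rewrite /T'; case: (prune keep T).
have Lr := prune_leaves keep T.
have Trep' : tree_rep e T'.
  rewrite /T'; case E: (prune keep T) => [r|] //=.
  rewrite Mrep (prune_rep Trep E) !andbT /compatible.
  rewrite (_ : _ :&: _ = set0) ?cards0 //.
  apply/setP => z; rewrite !inE; apply/negP => /andP[zr zM].
  rewrite Gt1E in zr; case/hasP: zr => u ur zu.
  have uk : keep u by move: ur; rewrite E /= in Lr; rewrite Lr mem_filter => /andP[].
  by have := keptfar u z uk zu; rewrite zM.
have S'E : forall u, (u \in v |: hatS e S d) = (u == v) || (u \in hatS e S d).
  by move=> u; rewrite in_setU1.
have hatSS : forall u, u \in hatS e S d -> u \in S by move=> u; rewrite inE => /andP[].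
split.
- apply/subsetP => u; rewrite S'E => /orP[/eqP->//|/hatSS]; exact: (subsetP SVs).
- move=> x y; rewrite !S'E => /orP[/eqP->|xS] /orP[/eqP->|yS].
  + exact: eirr.
  + by case: (wv y (hatSdi y yS)).
  + by rewrite esym; case: (wv x (hatSdi x xS)).
  + exact: Sind (hatSS x xS) (hatSS y yS).
- move=> x; rewrite S'E => /orP[/eqP->|/hatSS xS]; last exact: Sdeg.
  exact: leq_trans di i9.
exists T'; split.
  split => //; split.
  + rewrite T'leaves cat_uniq Mu Lr filter_uniq //= andbT.
    apply/hasPn => u; rewrite mem_filter => uML; apply/negP => /andP[/andP[_ uM] _].
    by rewrite (leaf_in_Gt e uML) in uM.
  + apply/setP => u; rewrite inE T'leaves mem_cat Lr mem_filter S'E.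
    apply/idP/idP.
    * case/orP => [/andP[/andP[-> _] _]|]; first by rewrite orbT.
      by rewrite Ml => /orP[->//|/andP[-> _]]; rewrite orbT.
    * case/orP => [/eqP->|uS]; first by rewrite Ml eqxx orbT.
      case: (boolP (u \in (Gt e M).1)) => uM.
        have [y0 y0Y uc] := Sd_notM u uS uM.
        by rewrite Ml uS; apply/orP; right; apply/orP; right; apply/exists_inP; exists y0.
      have : u \in [set x in leaves T] by rewrite Tleaves hatSS.
      by rewrite inE /keep uS uM => ->.
move=> j /andP[j4 j9] x.
case: (ltnP j d) => [jd|dj].
- have hatE : hatS e (v |: hatS e S d) j = hatS e S j.
    apply/setP => u; rewrite !inE.
    case: (eqVneq u v) => [->|uv] /=.
      have dj' : (deg e v <= j) = false by apply/negbTE; rewrite -ltnNge; exact: jd.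
      by rewrite dj' !andbF.
    case: (u \in S) => //=; apply/idP/idP => [/andP[_ ->]//|/andP[u4 uj]].
    by rewrite u4 uj (leq_trans uj (ltnW jd)).
  have HE : Hsg e (v |: hatS e S d) j = Hsg e S j by rewrite /Hsg hatE.
  rewrite HE hatE => xH.
  have [y0 y0T [y0l y0G]] := Tnodes j (introT andP (conj j4 j9)) x xH.
  exists y0 => //.
  have y0l' : forall u, u \in leaves y0 -> (u \in hatS e S j) && (u \in (sgcomp (Hsg e S j) x).1).
    by move=> u uy; rewrite -in_setI -y0l inE.
  have hatSjd : {subset hatS e S j <= hatS e S d}.
    by move=> w; rewrite !inE => /andP[-> /andP[-> wj]] /=; exact: leq_trans wj (ltnW jd).
  case: (boolP (all keep (leaves y0))) => ak.
    by have [r Er yr] := prune_subtree y0T ak; apply: T'r Er yr.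
  case/allPn: ak => u uy; rewrite /keep negb_and negbK.
  have /andP[uSj uc] := y0l' u uy.
  rewrite (hatSjd u uSj) /= => uM.
  have [y1 y1Y uc1] := Sd_notM u (hatSjd u uSj) uM.
  have [n0 [n0T n0M n0l]] := Mn y1 y1Y.
  apply: subtree_trans T'M; apply: subtree_trans n0M.
  apply: (subtree_incl Tuniq y0T n0T) => w wy.
  have /andP[wSj wc] := y0l' w wy.
  have : w \in [set z in leaves n0].
    rewrite n0l in_setI (hatSjd w wSj) /= cH1.
    move: wc uc uc1; rewrite !inE => /andP[wH cw] /andP[uH cu].
    move=> /andP[_ c1]; rewrite (Hsg_sub1 hatSjd wH) /=.
    apply: connect_trans c1 _.
    have symj := sym_connect_sym (Hsg_sym S j esym).
    apply: (@connect_mono _ (sgrel (Hsg e S j))).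
      by move=> p q; apply: Hsg_sub2.
    by apply: connect_trans _ cw; rewrite symj.
  by rewrite inE.
have hatE : hatS e (v |: hatS e S d) j = v |: hatS e S d.
  apply/setP => u; rewrite in_setU1 !inE.
  case: (eqVneq u v) => [->|uv] /=.
    by rewrite d4 (leq_trans _ dj).
  case: (u \in S) => //=; apply/idP/idP => [/andP[-> _]//|/andP[u4 ud]].
  by rewrite u4 ud (leq_trans ud dj).
set H' := Hsg e (v |: hatS e S d) j.
have H'1 : forall z, (z \in H'.1) = (z \in cnbhd e v) || (z \in H.1).
  move=> z; apply/Hsg1P/orP; rewrite hatE.
  - case=> w; rewrite in_setU1 => /orP[/eqP->|wS] zw; [by left | right].
    by apply/Hsg1P; exists w.
  - case=> [zv|/Hsg1P[w wS zw]]; first by exists v => //; rewrite in_setU1 eqxx.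
    by exists w => //; rewrite in_setU1 wS orbT.
have H'2 : forall p, (p \in H'.2) = (p \in (Gv e v).2) || (p \in H.2).
  move=> p; apply/Hsg2P/orP; rewrite hatE.
  - case=> w; rewrite in_setU1 => /orP[/eqP->|wS] zw; [by left | right].
    by apply/Hsg2P; exists w.
  - case=> [zv|/Hsg2P[w wS zw]]; first by exists v => //; rewrite in_setU1 eqxx.
    by exists w => //; rewrite in_setU1 wS orbT.
have symH' : symmetric (sgrel H') := Hsg_sym _ j esym.
have csym' := sym_connect_sym symH'.
have rel'E : forall p q, sgrel H' p q = ((p, q) \in (Gv e v).2) || sgrel H p q.
  by move=> p q; rewrite /sgrel H'2.
have monoH : forall a b, connect (sgrel H) a b -> connect (sgrel H') a b.
  by move=> a b; apply: connect_mono => p q h; rewrite rel'E h orbT.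
have conn_vz : forall z, z \in cnbhd e v -> connect (sgrel H') v z.
  move=> z; rewrite cnbhdE => /orP[/eqP->|evz]; first exact: connect0.
  by apply: connect1; rewrite rel'E Gv2E /= !cnbhdE eqxx evz orbT.
have conn_Y : forall y0, y0 \in Y -> connect (sgrel H') v y0.
  move=> y0 y0Y; apply: conn_vz; move/subsetP: YN => /(_ y0 y0Y).
  by rewrite in_setI cnbhdE inE => /andP[-> _]; rewrite orbT.
rewrite hatE => xH'.
case: (boolP (connect (sgrel H') x v)) => cxv.
- rewrite (comp_same symH' cxv).
  have compV1 : forall z, (z \in (sgcomp H' v).1) = (z \in (Gt e M).1).
    move=> z; rewrite inE; apply/idP/idP.
    + case/andP => _; apply: (@connect_closed_set _ _ (fun z => z \in (Gt e M).1)).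
        move=> p q pM; rewrite rel'E => /orP[|pq].
          by rewrite Gv2E /= => /and3P[_ qv _]; rewrite MG1 qv.
        have [pH qH] := edgeH (p, q) pq.
        have [y0 y0Y pc] := MvH p pM pH.
        apply: (Mcomp y0) => //; rewrite cH1 qH /=.
        move: pc; rewrite cH1 => /andP[_ c]; exact: connect_trans c (connect1 pq).
      by rewrite MG1 cnbhdE eqxx.
    + rewrite MG1 H'1 => /orP[zv|/exists_inP[y0 y0Y zc]].
        by rewrite zv conn_vz.
      move: zc; rewrite cH1 => /andP[zH c]; rewrite zH orbT /=.
      exact: connect_trans (conn_Y y0 y0Y) (monoH _ _ c).
  have compV2 : forall p, (p \in (sgcomp H' v).2) = (p \in (Gt e M).2).
    move=> p; rewrite inE; apply/idP/idP.
    + case/andP; rewrite H'2 MG2 => /orP[->//|pH] c.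
      have p1M : p.1 \in (Gt e M).1 by rewrite -compV1 inE H'1 (proj1 (edgeH p pH)) orbT c.
      have [y0 y0Y pc] := MvH p.1 p1M (proj1 (edgeH p pH)).
      apply/orP; right; apply/exists_inP; exists y0 => //.
      by move: pc; rewrite cH2 cH1 pH => /andP[].
    + rewrite MG2 H'2 => /orP[pv|/exists_inP[y0 y0Y pc]].
        rewrite pv /=; apply: conn_vz; by move: pv; rewrite Gv2E => /and3P[].
      move: pc; rewrite cH2 => /andP[pH c]; rewrite pH orbT /=.
      exact: connect_trans (conn_Y y0 y0Y) (monoH _ _ c).
  exists M => //; split.
  + apply/setP => u; rewrite inE in_setI in_setU1 compV1 Ml MG1.
    case: (eqVneq u v) => [->|uv] /=; first by rewrite cnbhdE eqxx.
    case: (boolP (u \in hatS e S d)) => //= uS.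
    have [_ nuv] := wv u (hatSdi u uS).
    by rewrite cnbhdE (negbTE uv) (negbTE nuv).
  + rewrite [Gt e M]surjective_pairing [sgcomp H' v]surjective_pairing.
    by congr pair; apply/setP => z; rewrite ?compV1 ?compV2.
- have far : forall z, connect (sgrel H') x z -> z \notin cnbhd e v.
    move=> z cz; apply/negP => zv; move/negP: cxv; apply.
    by apply: connect_trans cz _; rewrite csym'; apply: conn_vz.
  have xH : x \in H.1.
    move: xH'; rewrite H'1 => /orP[xv|//].
    by have := far x (connect0 _ _); rewrite xv.
  have cE : forall z, connect (sgrel H') x z = connect (sgrel H) x z.
    move=> z; apply/idP/idP; last exact: monoH.
    apply: connect_restr => y q cy; rewrite rel'E => /orP[|//].
    rewrite Gv2E /= => /and3P[yv _ _].
    by have := far y cy; rewrite yv.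
  have compE : sgcomp H' x = sgcomp H x.
    rewrite /sgcomp; congr pair; apply/setP => z; rewrite !inE cE.
    + rewrite H'1; case: (boolP (connect (sgrel H) x z)) => c; rewrite ?andbF //.
      have := far z; rewrite cE => /(_ c) /negbTE ->; by [].
    + rewrite H'2; case: (boolP (connect (sgrel H) x z.1)) => c; rewrite ?andbF //.
      case: (boolP (z \in (Gv e v).2)) => //= zv.
      have := far z.1; rewrite cE => /(_ c); move: zv; rewrite Gv2E => /and3P[-> _ _].
      by [].
  rewrite compE.
  have [n nT [nl nG]] := Hnode x xH.
  exists n; last split => //.
  + have ak : all keep (leaves n).
      apply/allP => u un.
      have : u \in [set z in leaves n] by rewrite inE.
      rewrite nl in_setI => /andP[uS uc].
      rewrite /keep uS /=; apply/negP => uM.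
      have [y1 y1Y uc1] := Sd_notM u uS uM.
      move/negP: cxv; apply.
      move: uc uc1; rewrite !cH1 => /andP[_ c1] /andP[_ c2].
      apply: connect_trans (monoH _ _ (connect_trans c1 _)) _; first by rewrite csym; exact: c2.
      by rewrite csym'; apply: conn_Y.
    by have [r Er yr] := prune_subtree nT ak; apply: T'r Er yr.
  + rewrite nl; apply/setP => u; rewrite !in_setI in_setU1.
    case: (eqVneq u v) => [->|] //=.
    by rewrite cH1 (negbTE vH) andbF.
Qed.
Unset Implicit Arguments.

Theorem lemma6 (V : finType) (Vs : {set V}) (e : rel V) (Fs : seq {set V})
    (S : {set V}) (i : nat) (v : V) :
  is_triang Vs e Fs -> irreducible Vs e Fs -> 1 <= euler_genus Vs e Fs ->
  good Vs e S ->
  (forall S' : {set V}, good Vs e S' -> phi_ge (phi e S) (phi e S')) ->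
  4 <= i <= 9 ->
  v \in Vs -> v \notin (Hsg e S i).1 -> deg e v <= i ->
  exists2 x, x \in (Hsg e S i).1 & 3 <= #|nbhd e v :&: (sgcomp (Hsg e S i) x).1|.
Proof.
move=> Ht Hirr Hg Sgood Smax hi vVs vH dvi.
have Ht' := Ht; case: Ht' => [esym [eirr _]].
have d4 := deg_ge4 Ht Hirr Hg vVs.
case: (boolP [exists x in (Hsg e S i).1, 3 <= #|nbhd e v :&: (sgcomp (Hsg e S i) x).1|]).
  by case/exists_inP => x xH h; exists x.
move/exists_inPn => Hcap.
have Hcap' : forall x, x \in (Hsg e S i).1 -> #|nbhd e v :&: (sgcomp (Hsg e S i) x).1| <= 2.
  by move=> x /Hcap; rewrite -ltnNge.
have G := good_ext esym eirr Sgood hi vVs vH (introT andP (conj d4 dvi)) Hcap'.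
have := Smax _ G.
set d := deg e v.
set S' := v |: hatS e S d.
have vSd : v \notin Si e S d.
  rewrite inE; apply/negP => /andP[vS /eqP dd].
  move/negP: vH; apply; apply/Hsg1P; exists v; last by rewrite !inE eqxx.
  by rewrite inE vS d4 dvi.
have Elt : forall k, 4 <= k < d -> phi e S' k = phi e S k.
  move=> k /andP[k4 kd]; rewrite /phi (_ : Si e S' k = Si e S k) //; apply/setP => x; rewrite !inE.
  case: (eqVneq x v) => [->|xv] /=.
    by rewrite -/d (_ : (d == k) = false) ?andbF //; apply/negbTE; rewrite neq_ltn kd orbT.
  case: (x \in S) => //=; case: (eqVneq (deg e x) k) => [->|] //=; rewrite ?andbF ?andbT //.
  by rewrite k4 (ltnW kd).
have Ed : phi e S' d = (phi e S d).+1.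
  rewrite /phi (_ : Si e S' d = v |: Si e S d).
    by rewrite cardsU1 vSd.
  apply/setP => x; rewrite in_setU1 !inE.
  case: (eqVneq x v) => [->|xv] /=; first by rewrite eqxx.
  case: (x \in S) => //=; case: (eqVneq (deg e x) d) => [->|] //=; rewrite ?andbF ?andbT //.
  by rewrite d4 leqnn.
have d9 : d <= 9 by apply: leq_trans dvi _; case/andP: hi.
case=> [Heq|[j [/andP[j4 j9] Hlt Hj]]].
  have := Heq d (introT andP (conj d4 d9)); rewrite Ed => /eqP.
  by rewrite eqn_leq ltnn andbF.
case: (ltngtP j d) => [jd|dj|jd].
- by rewrite Elt ?j4 // ltnn in Hj.
- have := Hlt d (introT andP (conj d4 dj)); rewrite Ed => /eqP.
  by rewrite eqn_leq ltnn andbF.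
- by subst j; rewrite Ed ltnNge leqnSn in Hj.
Qed.
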